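(* Let $\gamma<0$, $1\le p<\infty$, and let $L^p_\gamma(\mathbb{R})=L^p(\mathbb{R},(1+e^x)^\gamma dx)$. For every nonnegative $f\in L^p_\gamma(\mathbb{R})$, $$\liminf_{h\to-\infty}\|f+\tau_hf\|_{L^p_\gamma(\mathbb{R})}\ge2^{1/p}\|f\|_{L^p_\gamma(\mathbb{R})},$$ where $\tau_hf(x)=f(x-h)$. *)

(* Defs.v *)
From HB Require Import structures.
From mathcomp Require Import all_boot all_order all_algebra.
From mathcomp Require Import all_classical all_reals all_analysis.
Set Implicit Arguments. Unset Strict Implicit. Unset Printing Implicit Defensive.
Import Order.TTheory GRing.Theory Num.Theory.
Import numFieldNormedType.Exports.
Local Open Scope classical_set_scope.
Local Open Scope ring_scope.

Definition wgt {R : realType} (gamma : R) (x : R) : R := (1 + expR x) `^ gamma.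

Definition wLnorm {R : realType} (gamma p : R) (f : R -> R) : \bar R :=
  ((\int[lebesgue_measure]_x ((`|f x| `^ p * wgt gamma x)%:E)) `^ p^-1)%E.

Definition in_wLp {R : realType} (gamma p : R) (f : R -> R) : Prop :=
  measurable_fun [set: R] f /\
  (\int[lebesgue_measure]_x ((`|f x| `^ p * wgt gamma x)%:E) < +oo)%E.

Definition tau {R : realType} (h : R) (f : R -> R) : R -> R := fun x => f (x - h).

(* Main.v *)
Require Import Defs.
From HB Require Import structures.
From mathcomp Require Import all_boot all_order all_algebra.
From mathcomp Require Import all_classical all_reals all_analysis.
From mathcomp Require Import measurable_realfun.
From mathcomp Require Import lra.
Import Order.TTheory GRing.Theory Num.Theory.
Import numFieldNormedType.Exports.
Local Open Scope classical_set_scope.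
Local Open Scope ring_scope.

Section shift.
Context {R : realType} (c : R).

Definition mshift : set (measurableTypeR R) -> \bar R :=
  pushforward (@lebesgue_measure R) (fun x => x + c).

Lemma mshift_mphi0 : measurable_fun [set: R] (fun x : R => x + c).
Proof. by apply: measurable_realfun.measurable_funD => //; exact: measurable_cst. Qed.
Lemma mshift_mphi : measurable_fun (T:=measurableTypeR R) (U:=measurableTypeR R) [set: R] (fun x : R => x + c).
Proof. exact: mshift_mphi0. Qed.

Let mshift0 : mshift set0 = 0%E.
Proof. by rewrite /mshift /pushforward preimage_set0 measure0. Qed.

Let mshift_ge0 A : (0 <= mshift A)%E.
Proof. by rewrite /mshift /pushforward; exact: measure_ge0. Qed.

Let mshift_sa : semi_sigma_additive mshift.
Proof.
move=> F mF tF mUF; rewrite /mshift /pushforward preimage_bigcup.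
apply: measure_semi_sigma_additive.
- by move=> n; rewrite -[X in measurable X]setTI; exact: mshift_mphi.
- apply/trivIsetP => /= i j _ _ ij; rewrite -preimage_setI.
  by move/trivIsetP : tF => /(_ _ _ _ _ ij) ->//; rewrite preimage_set0.
- by rewrite -preimage_bigcup -[X in measurable X]setTI; exact: mshift_mphi.
Qed.

HB.instance Definition _ := isMeasure.Build _ _ _ mshift
  mshift0 mshift_ge0 mshift_sa.


Lemma mshiftE A : measurable A -> mshift A = lebesgue_measure A.
Proof.
move=> mA; apply/esym. apply: (@lebesgue_measure_unique R mshift _ A mA).
move=> X [[a b] _ <-] /=.
have -> : mshift `]a, b]%classic = lebesgue_measure `]a - c, b - c]%classic.
  rewrite /mshift /pushforward; congr (lebesgue_measure _).
  apply/seteqP; split => x /=; rewrite !in_itv /= => /andP[h1 h2];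
    apply/andP; split; lra.
rewrite !lebesgue_measure_itv /= !lte_fin.
have -> : (a - c < b - c) = (a < b) by rewrite ltrBlDr subrK.
by case: ifP => // _; rewrite -!EFinD; congr (_%:E); lra.
Qed.

End shift.

Lemma integral_shift {R : realType} (c : R) (H : R -> \bar R) :
  measurable_fun [set: R] H -> (forall x, (0 <= H x)%E) ->
  (\int[lebesgue_measure]_x H (x + c)%R = \int[lebesgue_measure]_x H x)%E.
Proof.
move=> mH H0.
have := ge0_integral_pushforward (mshift_mphi c) lebesgue_measure (D:=setT) (f:=H)
  measurableT mH (fun y _ => H0 y).
rewrite preimage_setT => <-.
change (\int[mshift c]_y H y = \int[lebesgue_measure]_x H x)%E.
by apply: (eq_measure_integral lebesgue_measure) => A mA _; exact: mshiftE.
Qed.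

Lemma powR_add_ge {R : realType} (a b p : R) : 0 <= a -> 0 <= b -> 1 <= p ->
  a `^ p + b `^ p <= (a + b) `^ p.
Proof.
move=> a0 b0 p1; have p0 : p != 0 by apply/eqP => p0; move: p1; rewrite p0 ler10.
have [->|an0] := eqVneq a 0; first by rewrite powR0 // !add0r.
have [->|bn0] := eqVneq b 0; first by rewrite powR0 // !addr0.
have ap : 0 < a by rewrite lt_def an0.
have bp : 0 < b by rewrite lt_def bn0.
set s := a + b; have sp : 0 < s by rewrite addr_gt0.
have ha : a = (a / s) * s by rewrite divfK // gt_eqF.
have hb : b = (b / s) * s by rewrite divfK // gt_eqF.
have t1 : a / s <= 1 by rewrite ler_pdivrMr // mul1r lerDl ltW.
have t2 : b / s <= 1 by rewrite ler_pdivrMr // mul1r lerDr ltW.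
have ea : a `^ p = (a/s) `^ p * s `^ p.
  by rewrite {1}ha powRM // ?divr_ge0 // ltW.
have eb : b `^ p = (b/s) `^ p * s `^ p.
  by rewrite {1}hb powRM // ?divr_ge0 // ltW.
rewrite ea eb.
apply: (@le_trans _ _ ((a / s) * s `^ p + (b / s) * s `^ p)).
  apply: lerD; apply: ler_wpM2r; rewrite ?powR_ge0 //; apply: ge1r_powR => //;
    rewrite ?divr_gt0 //= ?t1 ?t2 //.
by rewrite -mulrDl -mulrDl divff ?gt_eqF // mul1r.
Qed.

Lemma wgt_anti {R : realType} (gamma x y : R) : gamma < 0 -> x <= y ->
  wgt gamma y <= wgt gamma x.
Proof.
move=> g0 xy; rewrite /wgt /powR.
have h z : (1 + expR z == 0) = false by rewrite gt_eqF // addr_gt0 // expR_gt0.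
rewrite !h ler_expR; apply: ler_wnM2l; first exact: ltW.
by rewrite ler_ln ?posrE ?addr_gt0 ?expR_gt0 // lerD2l ler_expR.
Qed.

Lemma wgt_ge0 {R : realType} (gamma x : R) : 0 <= wgt gamma x.
Proof. exact: powR_ge0. Qed.

Lemma measurable_wgt {R : realType} (gamma : R) : measurable_fun [set: R] (wgt gamma).
Proof.
apply: (measurableT_comp (f := fun z => z `^ gamma) (g := fun x => 1 + expR x)).
  exact: measurable_powR.
apply: measurable_funD; [exact: measurable_cst | exact: measurable_expR].
Qed.

Lemma main_ineq {R : realType} (gamma p : R) (f : R -> R) (h : R) :
  gamma < 0 -> 1 <= p -> (forall x, 0 <= f x) -> measurable_fun [set: R] f ->
  h <= 0 ->
  (2%:E * \int[lebesgue_measure]_x ((`|f x| `^ p * wgt gamma x)%:E) <=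
   \int[lebesgue_measure]_x ((`|f x + tau h f x| `^ p * wgt gamma x)%:E))%E.
Proof.
move=> g0 p1 f0 mf h0.
set F := fun x => (`|f x| `^ p * wgt gamma x)%:E.
set T := fun x => (`|f (x - h)| `^ p * wgt gamma x)%:E.
have msh : measurable_fun [set: R] (fun x : R => x - h).
  exact: mshift_mphi0.
have mfh : measurable_fun [set: R] (fun x => f (x - h)).
  exact: (measurableT_comp mf msh).
have mF : measurable_fun [set: R] F.
  apply/measurable_EFinP; apply: measurable_funM; last exact: measurable_wgt.
  apply: (measurableT_comp (measurable_powR p)).
  by apply: measurableT_comp => //; exact: normr_measurable.
have mT : measurable_fun [set: R] T.
  apply/measurable_EFinP; apply: measurable_funM; last exact: measurable_wgt.
  apply: (measurableT_comp (measurable_powR p)).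
  by apply: measurableT_comp => //; exact: normr_measurable.
have F0 x : (0 <= F x)%E by rewrite lee_fin mulr_ge0 ?powR_ge0 ?wgt_ge0.
have T0 x : (0 <= T x)%E by rewrite lee_fin mulr_ge0 ?powR_ge0 ?wgt_ge0.
have mS : measurable_fun [set: R]
    (fun x => (`|f x + tau h f x| `^ p * wgt gamma x)%:E).
  apply/measurable_EFinP; apply: measurable_funM; last exact: measurable_wgt.
  apply: (measurableT_comp (measurable_powR p)).
  apply: measurableT_comp; first exact: normr_measurable.
  exact: measurable_funD.
have e1 := integral_shift (- h) F mF F0.
have l1 : (\int[lebesgue_measure]_x F x <= \int[lebesgue_measure]_x T x)%E.
  rewrite -e1; apply: ge0_le_integral.
  - exact: measurableT.
  - by move=> x _; exact: F0.
  - exact: (measurableT_comp mF msh).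
  - exact: mT.
  - move=> x _. rewrite /F /T. rewrite lee_fin.
    apply: ler_wpM2l; first exact: powR_ge0.
    apply: wgt_anti; first exact: g0. rewrite lerDl. by rewrite oppr_ge0.
apply: (@le_trans _ _ (\int[lebesgue_measure]_x (F x + T x))%E).
  rewrite ge0_integralD; first last.
  - exact: mT.
  - by move=> x _; exact: T0.
  - exact: mF.
  - by move=> x _; exact: F0.
  - exact: measurableT.
  rewrite mule_natl mule2n; exact: leeD2l.
apply: ge0_le_integral.
- exact: measurableT.
- move=> x _; exact: (adde_ge0 (F0 x) (T0 x)).
- exact: (emeasurable_funD mF mT).
- exact: mS.
- move=> x _. rewrite /F /T /tau. rewrite -EFinD lee_fin. rewrite -mulrDl.
  apply: ler_wpM2r; first exact: wgt_ge0.
  rewrite (ger0_norm (addr_ge0 (f0 x) (f0 (x - h)))).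
  rewrite (ger0_norm (f0 x)) (ger0_norm (f0 (x - h))).
  apply: powR_add_ge; [exact: f0|exact: f0|exact: p1].
Qed.

Theorem lemma8p1 (R : realType) (gamma p : R) (f : R -> R) :
  gamma < 0 -> 1 <= p ->
  (forall x, 0 <= f x) -> in_wLp gamma p f ->
  ((2 `^ p^-1)%:E * wLnorm gamma p f <=
   limf_einf (fun h : R => wLnorm gamma p (fun x => (f x + tau h f x)%R)) (ninfty_nbhs R))%E.
Proof.
move=> g0 p1 f0 [mf _].
have p0 : 0 <= p^-1 by rewrite invr_ge0; apply: le_trans p1.
have key : forall h : R, h <= 0 -> ((2 `^ p^-1)%:E * wLnorm gamma p f <=
    wLnorm gamma p (fun x => (f x + tau h f x)%R))%E.
  move=> h h0; rewrite /wLnorm.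
  have HJ := main_ineq gamma p f h g0 p1 f0 mf h0.
  have I0 : (0 <= \int[lebesgue_measure]_x ((`|f x| `^ p * wgt gamma x)%:E))%E.
    apply: integral_ge0 => x _; rewrite lee_fin; apply: mulr_ge0;
      [exact: powR_ge0 | exact: wgt_ge0].
  rewrite -poweR_EFin -poweRM; [|by rewrite lee_fin | exact: I0].
  apply: gt0_ler_poweR; [exact: p0 | | | exact: HJ].
  - by rewrite in_itv /= leey andbT mule_ge0 // lee_fin.
  - by rewrite in_itv /= leey andbT; apply: le_trans HJ; rewrite mule_ge0 // lee_fin.
have V0 : ninfty_nbhs R [set h : R | h <= 0].
  exact: (nbhs_ninfty_le (real0 R)).
rewrite limf_einfE.
apply: le_trans (ereal_sup_ubound _); last first.
  by exists [set h : R | h <= 0].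
apply/ereal_infP => y [h h0 <-]; exact: key.
Qed.
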